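(* Let $k$ be a field of characteristic zero, $n\ge1$, $S=k[x_1,\ldots,x_n]$, and $(S,L)$ a triangularizable Lie–Rinehart algebra with basis $\alpha_1,\ldots,\alpha_n$ and enveloping algebra $U$. The restriction of $d^0:U\to\mathcal{X}^1$, $d^0(u)=\sum_{k=1}^n[u,x_k]\hat x_k$, to $F_1U=S\oplus\bigoplus_{i=1}^nS\alpha_i$ has kernel $F_0U=S$.
   Context: Triangularizable: $L\subseteq\operatorname{Der}(S)$ an $S$-submodule and Lie subalgebra, free with basis of derivations $\alpha_1,\ldots,\alpha_n$ such that $\alpha_i(x_j)=0$ for $i>j$ and $\alpha_1(x_1)\cdots\alpha_n(x_n)\neq0$. $U$ is the universal enveloping algebra of $(S,L)$, with $[\alpha,s]=\alpha(s)$. $\mathcal{X}^1=U\otimes_k W^*$ where $W=\operatorname{span}_k(x_1,\ldots,x_n)$ and $\hat x_1,\ldots,\hat x_n$ is the dual basis. $F_pU$ is the $S$-span of the monomials $\alpha_n^{i_n}\cdots\alpha_1^{i_1}$ with $i_1+\cdots+i_n\le p$. *)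

(* Defs.v *)
From HB Require Import structures.
From mathcomp Require Import all_boot all_order all_algebra.
From mathcomp Require Import multinomials.mpoly.
Set Implicit Arguments. Unset Strict Implicit. Unset Printing Implicit Defensive.
Import GRing.Theory.
Local Open Scope ring_scope.

(* S = k[x_1,...,x_n] is {mpoly k[n]}; variable x_(i+1) is 'X_i, i : 'I_n. *)

Definition isDer (k : fieldType) (n : nat) (D : {mpoly k[n]} -> {mpoly k[n]}) : Prop :=
  [/\ forall p q, D (p + q) = D p + D q,
      forall (c : k) p, D (c *: p) = c *: D p
    & forall p q, D (p * q) = p * D q + D p * q].

Definition inL (k : fieldType) (n : nat) (alpha : 'I_n -> {mpoly k[n]} -> {mpoly k[n]})
  (D : {mpoly k[n]} -> {mpoly k[n]}) : Prop :=
  exists c : 'I_n -> {mpoly k[n]}, forall p, D p = \sum_(i < n) c i * alpha i p.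

Definition triangularizable (k : fieldType) (n : nat)
  (alpha : 'I_n -> {mpoly k[n]} -> {mpoly k[n]}) : Prop :=
  [/\ forall i, isDer (alpha i),
      forall c : 'I_n -> {mpoly k[n]},
        (forall p, \sum_(i < n) c i * alpha i p = 0) -> forall i, c i = 0,
      forall D E, inL alpha D -> inL alpha E -> inL alpha (fun p => D (E p) - E (D p)),
      forall i j : 'I_n, (j < i)%N -> alpha i 'X_j = 0
    & \prod_(i < n) alpha i 'X_i != 0].

Definition LR_compatible (k : fieldType) (n : nat)
  (alpha : 'I_n -> {mpoly k[n]} -> {mpoly k[n]}) (A : pzRingType)
  (phi : {rmorphism {mpoly k[n]} -> A}) (psi : ({mpoly k[n]} -> {mpoly k[n]}) -> A) : Prop :=
  [/\ forall D E, inL alpha D -> inL alpha E ->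
        psi (fun p => D p + E p) = psi D + psi E,
      forall s D, inL alpha D -> psi (fun p => s * D p) = phi s * psi D,
      forall D E, inL alpha D -> inL alpha E ->
        psi (fun p => D (E p) - E (D p)) = psi D * psi E - psi E * psi D
    & forall D s, inL alpha D -> psi D * phi s - phi s * psi D = phi (D s)].

Definition is_enveloping (k : fieldType) (n : nat)
  (alpha : 'I_n -> {mpoly k[n]} -> {mpoly k[n]}) (U : pzRingType)
  (iota : {rmorphism {mpoly k[n]} -> U}) (j : ({mpoly k[n]} -> {mpoly k[n]}) -> U) : Prop :=
  LR_compatible alpha iota j /\
  forall (A : pzRingType) (phi : {rmorphism {mpoly k[n]} -> A})
         (psi : ({mpoly k[n]} -> {mpoly k[n]}) -> A),
    LR_compatible alpha phi psi ->
    exists f : {rmorphism U -> A},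
      [/\ forall s, f (iota s) = phi s,
          forall D, inL alpha D -> f (j D) = psi D
        & forall g : {rmorphism U -> A},
            (forall s, g (iota s) = phi s) ->
            (forall D, inL alpha D -> g (j D) = psi D) -> forall u, g u = f u].

Definition F1U (k : fieldType) (n : nat) (alpha : 'I_n -> {mpoly k[n]} -> {mpoly k[n]})
  (U : pzRingType) (iota : {rmorphism {mpoly k[n]} -> U})
  (j : ({mpoly k[n]} -> {mpoly k[n]}) -> U) (u : U) : Prop :=
  exists (s : {mpoly k[n]}) (c : 'I_n -> {mpoly k[n]}),
    u = iota s + \sum_(i < n) iota (c i) * j (alpha i).

Definition F0U (k : fieldType) (n : nat) (U : pzRingType)
  (iota : {rmorphism {mpoly k[n]} -> U}) (u : U) : Prop :=
  exists s : {mpoly k[n]}, u = iota s.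

(* X^1 = U (x) W^*, free U-module with basis xhat_1..xhat_n, represented by
   coefficient vectors 'I_n -> U; d^0 u = sum_k [u, x_k] xhat_k. *)
Definition d0 (k : fieldType) (n : nat) (U : pzRingType)
  (iota : {rmorphism {mpoly k[n]} -> U}) (u : U) : 'I_n -> U :=
  fun m => u * iota 'X_m - iota 'X_m * u.

(* Main.v *)
Require Import Defs.
From HB Require Import structures.
From mathcomp Require Import all_boot all_order all_algebra.
From mathcomp Require Import boolp.
From Stdlib Require Import ProofIrrelevance.
Set Implicit Arguments. Unset Strict Implicit. Unset Printing Implicit Defensive.
Import GRing.Theory.
Local Open Scope ring_scope.

Record aend (V : zmodType) := AEnd { af : V -> V; af_add : forall x y, af (x + y) = af x + af y }.

Lemma aend_eq (V : zmodType) (f g : aend V) : (forall x, af f x = af g x) -> f = g.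
Proof.
case: f g => f hf [g hg] /= H.
have E : f = g by apply: funext.
subst g; congr AEnd; apply: proof_irrelevance.
Qed.

HB.instance Definition _ (V : zmodType) := gen_eqMixin (aend V).
HB.instance Definition _ (V : zmodType) := gen_choiceMixin (aend V).

Section AE.
Variable V : zmodType.
Lemma af0 (f : aend V) : af f 0 = 0.
Proof. by apply: (addrI (af f 0)); rewrite -af_add !addr0. Qed.
Definition ae0 : aend V := @AEnd V (fun _ => 0) (fun _ _ => esym (addr0 0)).
Definition aeopp (f : aend V) : aend V :=
  @AEnd V (fun x => - af f x) (fun x y => ltac:(by cbv beta; rewrite af_add opprD)).
Definition aeadd (f g : aend V) : aend V :=
  @AEnd V (fun x => af f x + af g x) (fun x y => ltac:(by cbv beta; rewrite !af_add addrACA)).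
Definition ae1 : aend V := @AEnd V id (fun _ _ => erefl).
Definition aemul (f g : aend V) : aend V :=
  @AEnd V (fun x => af f (af g x)) (fun x y => ltac:(by cbv beta; rewrite !af_add)).
Lemma aeaddA : associative aeadd. Proof. by move=> *; apply: aend_eq => x /=; rewrite addrA. Qed.
Lemma aeaddC : commutative aeadd. Proof. by move=> *; apply: aend_eq => x /=; rewrite addrC. Qed.
Lemma aeadd0 : left_id ae0 aeadd. Proof. by move=> *; apply: aend_eq => x /=; rewrite add0r. Qed.
Lemma aeaddN : left_inverse ae0 aeopp aeadd. Proof. by move=> *; apply: aend_eq => x /=; rewrite addNr. Qed.
End AE.

HB.instance Definition _ (V : zmodType) := GRing.isZmodule.Build (aend V)
  (@aeaddA V) (@aeaddC V) (@aeadd0 V) (@aeaddN V).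

Section AE2.
Variable V : zmodType.
Lemma aemulA : associative (@aemul V). Proof. by move=> *; apply: aend_eq. Qed.
Lemma aemul1 : left_id (@ae1 V) (@aemul V). Proof. by move=> *; apply: aend_eq. Qed.
Lemma aemulr1 : right_id (@ae1 V) (@aemul V). Proof. by move=> *; apply: aend_eq. Qed.
Lemma aemulDl : left_distributive (@aemul V) +%R. Proof. by move=> *; apply: aend_eq. Qed.
Lemma aemulDr : right_distributive (@aemul V) +%R.
Proof. by move=> f g h; apply: aend_eq => x /=; rewrite af_add. Qed.
End AE2.

HB.instance Definition _ (V : zmodType) := GRing.Zmodule_isPzRing.Build (aend V)
  (@aemulA V) (@aemul1 V) (@aemulr1 V) (@aemulDl V) (@aemulDr V).

Lemma af_addE (V : zmodType) (f g : aend V) x : af (f + g) x = af f x + af g x. Proof. by []. Qed.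
Lemma af_mulE (V : zmodType) (f g : aend V) x : af (f * g) x = af f (af g x). Proof. by []. Qed.
Lemma af_oppE (V : zmodType) (f : aend V) x : af (- f) x = - af f x. Proof. by []. Qed.
Lemma af_zeroE (V : zmodType) x : af (0 : aend V) x = 0. Proof. by []. Qed.
Lemma af_oneE (V : zmodType) x : af (1 : aend V) x = x. Proof. by []. Qed.

Section Mul.
Variable R : comPzRingType.
Definition mulop (s : R) : aend R := @AEnd R (fun x => s * x) (fun x y => mulrDr s x y).
Lemma mulop_zmod : zmod_morphism mulop.
Proof. by move=> s t; apply: aend_eq => x /=; rewrite mulrBl. Qed.
Lemma mulop_mon : monoid_morphism mulop.
Proof. split; first by apply: aend_eq => x /=; rewrite mul1r.
by move=> s t; apply: aend_eq => x /=; rewrite mulrA. Qed.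
HB.instance Definition _ := GRing.isZmodMorphism.Build R (aend R) mulop mulop_zmod.
HB.instance Definition _ := GRing.isMonoidMorphism.Build R (aend R) mulop mulop_mon.
End Mul.

From mathcomp Require Import multinomials.mpoly.
Require Import Defs.
From mathcomp Require Import ring.

Definition psi (V : zmodType) (D : V -> V) : aend V :=
  match pselect (forall x y, D (x + y) = D x + D y) with
  | left h => @AEnd V D h
  | right _ => 0
  end.

Lemma psiE (V : zmodType) (D : V -> V) (h : forall x y, D (x + y) = D x + D y) x :
  af (psi D) x = D x.
Proof. by rewrite /psi; case: pselect. Qed.

Section Main.
Variables (k : fieldType) (n : nat) (alpha : 'I_n -> {mpoly k[n]} -> {mpoly k[n]}).
Hypothesis hder : forall i, isDer (alpha i).

Lemma inL_add D : inL alpha D -> forall x y, D (x + y) = D x + D y.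
Proof.
case=> c Hc x y; rewrite !Hc -big_split; apply: eq_bigr => i _ /=.
by case: (hder i) => -> _ _; rewrite mulrDr.
Qed.

Lemma inL_leib D : inL alpha D -> forall x y, D (x * y) = x * D y + D x * y.
Proof.
case=> c Hc x y; rewrite !Hc mulr_sumr mulr_suml -big_split; apply: eq_bigr => i _ /=.
case: (hder i) => _ _ ->; ring.
Qed.

Lemma compat : LR_compatible alpha (@mulop {mpoly k[n]}) (@psi _).
Proof.
split.
  move=> D E hD hE; apply: aend_eq => x.
  rewrite af_addE !psiE //; [exact: inL_add| exact: inL_add|].
  by move=> a b; rewrite !(inL_add hD) !(inL_add hE) addrACA.
  move=> s D hD; apply: aend_eq => x.
  rewrite af_mulE !psiE //=; [exact: inL_add|].
  by move=> a b; rewrite (inL_add hD) mulrDr.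
  move=> D E hD hE; apply: aend_eq => x.
  have aD := inL_add hD; have aE := inL_add hE.
  rewrite af_addE af_oppE !af_mulE !psiE //.
  by move=> a b; rewrite !aE !aD !aE; ring.
  move=> D s hD; apply: aend_eq => x.
  have aD := inL_add hD.
  rewrite af_addE af_oppE !af_mulE !psiE //=.
  rewrite (inL_leib hD); ring.
Qed.
End Main.

Theorem lemma3p1 (k : fieldType) (n : nat) (hk : [pchar k] =i pred0) (hn : (0 < n)%N)
  (alpha : 'I_n -> {mpoly k[n]} -> {mpoly k[n]})
  (htri : triangularizable alpha)
  (U : pzRingType) (iota : {rmorphism {mpoly k[n]} -> U})
  (j : ({mpoly k[n]} -> {mpoly k[n]}) -> U)
  (hU : is_enveloping alpha iota j) :
  forall u : U, (F1U alpha iota j u /\ d0 iota u = (fun _ => 0)) <-> F0U iota u.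
Proof.
case: htri => hder _ _ htrig hprod.
move=> u; split; last first.
  case=> s ->; split.
    exists s, (fun _ => 0); rewrite big1 ?addr0 // => i _; by rewrite rmorph0 mul0r.
  by apply: funext => m; rewrite /d0 -!rmorphM mulrC subrr.
case=> [[s [c ->]] hd].
case: hU => hUc hUu.
case: (hUc) => _ _ _ hbr.
have inLa i : inL alpha (alpha i).
  exists (fun l => (l == i)%:R) => p.
  rewrite (bigD1 i) //= eqxx mul1r big1 ?addr0 // => l /negbTE ->; by rewrite mul0r.
have key m : iota (\sum_(i < n) c i * alpha i 'X_m) = 0.
  have := congr1 (fun f => f m) hd; rewrite /d0 /= => H; rewrite -H.
  rewrite rmorph_sum mulrDl mulrDr opprD addrACA -!rmorphM mulrC subrr add0r.
  rewrite mulr_suml mulr_sumr -sumrB; apply: eq_bigr => i _.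
  rewrite rmorphM -hbr // mulrBr !mulrA -[iota 'X_m * iota (c i)]rmorphM.
  by rewrite [_ * c i]mulrC rmorphM.
have inj t : iota t = 0 -> t = 0.
  move=> H; have [f [fi _ _]] := hUu _ _ _ (compat hder).
  have := congr1 (fun g => af (f g) 1) H; rewrite fi rmorph0 /= mulr1 => ->.
  by [].
have c0 : forall i, c i = 0.
  suff: forall m (i : 'I_n), (i < m)%N -> c i = 0 by move=> h i; apply: (h i.+1).
  elim=> [//|m IH] i; rewrite ltnS leq_eqVlt => /orP[/eqP eim|]; last exact: IH.
  have t := inj _ (key i).
  rewrite (bigD1 i) //= big1 ?addr0 in t; last first.
    move=> l; case: (ltngtP l i) => [lti|gti|/val_inj ->]; last by rewrite eqxx.
      by rewrite IH ?mul0r // -eim.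
    by rewrite htrig // mulr0.
  move/eqP: t; rewrite mulf_eq0 => /orP[/eqP //|/eqP ai].
  by move: hprod; rewrite (bigD1 i) //= ai mul0r eqxx.
exists s; rewrite big1 ?addr0 // => i _; by rewrite c0 rmorph0 mul0r.
Qed.
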